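(* Let $T_1,\dots,T_m:[0,1]\to[0,1]$ be $C^1$ maps with $T_i'(x)>0$ for all $x$, such that $T_i((0,1))\cap T_j((0,1))=\emptyset$ for $i\ne j$, and such that $D_n(\omega)\to0$ as $n\to\infty$ uniformly in $\omega\in\Sigma$. Then \[ \lim_{n\to\infty}\sup_{\omega\in\Sigma}\left|-\frac1n\log D_n(\omega)-A_ng(\omega)\right|=0. \]
   Context: $\Sigma=\{1,\dots,m\}^{\mathbb N}$ with shift $\sigma$; $\Pi(\omega)=\lim_{n\to\infty}T_{\omega_1}\circ\cdots\circ T_{\omega_n}(0)$. $D_n(\omega)=\operatorname{diam}(T_{\omega_1}\circ\cdots\circ T_{\omega_n}([0,1]))$. $g(\omega)=-\log T'_{\omega_1}(\Pi(\sigma\omega))$ and $A_ng(\omega)=\frac1n\sum_{i=0}^{n-1}g(\sigma^i\omega)$. *)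

(* Defs.v *)
From HB Require Import structures.
From mathcomp Require Import all_boot all_order all_algebra.
From mathcomp Require Import all_classical all_reals all_analysis.
Set Implicit Arguments. Unset Strict Implicit. Unset Printing Implicit Defensive.
Import Order.TTheory GRing.Theory Num.Theory.
Import numFieldNormedType.Exports.
Local Open Scope classical_set_scope.
Local Open Scope ring_scope.

Section Defs.
Variables (R : realType) (m : nat).

Definition has_deriv01 (f f' : R -> R) : Prop :=
  forall x, x \in `[0, 1] -> forall eps : R, 0 < eps ->
    exists2 delta : R, 0 < delta &
      forall y, y \in `[0, 1] -> `|y - x| < delta ->
        `|f y - f x - f' x * (y - x)| <= eps * `|y - x|.

Definition C1_01 (f f' : R -> R) : Prop :=
  has_deriv01 f f' /\ {within `[0, 1], continuous f'}.

Variable T : 'I_m -> R -> R.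

(* T_{w_1} o ... o T_{w_n}  (w_1 is w 0) *)
Fixpoint compn (n : nat) (w : nat -> 'I_m) : R -> R :=
  match n with
  | 0%N => id
  | n'.+1 => fun x => T (w 0%N) (compn n' (fun k => w k.+1) x)
  end.

Definition shift (w : nat -> 'I_m) : nat -> 'I_m := fun k => w k.+1.

Definition Pi (w : nat -> 'I_m) : R := limn (fun n => compn n w 0).

Definition diam (A : set R) : R := sup [set `|x.1 - x.2| | x in A `*` A].

Definition Dn (n : nat) (w : nat -> 'I_m) : R := diam (compn n w @` `[0, 1]).

Variable dT : 'I_m -> R -> R.  (* dT i = T_i' *)

Definition g (w : nat -> 'I_m) : R := - ln (dT (w 0%N) (Pi (shift w))).

Definition An (n : nat) (w : nat -> 'I_m) : R :=
  n%:R^-1 * \sum_(0 <= i < n) g (iter i shift w).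

End Defs.

(* Main.v *)
Require Import Defs.
From HB Require Import structures.
From mathcomp Require Import all_boot all_order all_algebra.
From mathcomp Require Import all_classical all_reals all_analysis.
Import Order.TTheory GRing.Theory Num.Theory.
Import numFieldNormedType.Exports.
Local Open Scope classical_set_scope.
Local Open Scope ring_scope.
Require Import Defs.
From mathcomp Require Import ring lra.
Set Implicit Arguments. Unset Strict Implicit.


Lemma deriv_cont {R : realType} (f df : R -> R) (a b : R) : has_deriv01 f df -> 0 <= a -> b <= 1 ->
  {within `[a, b], continuous f}.
Proof.
move=> H a0 b1; apply/subspace_continuousP => x Ax'.
have Ax : x \in `[0, 1].
  by move: Ax'; rewrite /= !in_itv /= => /andP[h1 h2]; apply/andP; split; lra.
apply/cvgrPdist_lt => e e0.
have [d d0 Hd] := H x Ax 1 ltr01.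
have r0 : 0 < Num.min d (e / (`|df x| + 1)).
  by rewrite lt_min d0 divr_gt0 // ltr_wpDl.
rewrite near_withinE.
near=> t => At.
have ht : `|x - t| < Num.min d (e / (`|df x| + 1)).
  by near: t; apply: cvgr_dist_lt.
rewrite /= distrC.
move: ht; rewrite lt_min => /andP[h1 h2].
have At' : t \in `[0, 1].
  by move: At; rewrite /= !in_itv /= => /andP[h1' h2']; apply/andP; split; lra.
have := Hd t At'; rewrite (distrC t x) h1 mul1r => /(_ isT) Hd'.
have -> : f t - f x = (f t - f x - df x * (t - x)) + df x * (t - x) by rewrite subrK.
apply: (le_lt_trans (ler_normD _ _)).
rewrite normrM (distrC t x).
apply: (le_lt_trans (lerD Hd' (lexx _))).
rewrite -{1}(mul1r `|x - t|) -mulrDl addrC.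
by rewrite -ltr_pdivlMl ?ltr_wpDl // mulrC.
Unshelve. all: by end_near. Qed.

Lemma deriv_is {R : realType} (f df : R -> R) (x : R) : has_deriv01 f df -> x \in `]0, 1[ ->
  is_derive x 1 f (df x).
Proof.
move=> H x01.
have hc : (fun h => h^-1 *: (f (h *: 1 + x) - f x)) @ 0^' --> df x.
  apply/cvgrPdist_le => e e0.
  have x0 : x \in `[0, 1] by apply: subset_itv_oo_cc.
  have [d d0 Hd] := H x x0 e e0.
  have r0 : 0 < Num.min d (Num.min x (1 - x)).
    by move: x01; rewrite in_itv /= => /andP[a b]; rewrite !lt_min d0 a subr_gt0 b.
  near=> h.
  have hr : `|h| < Num.min d (Num.min x (1 - x)).
    by near: h; apply: dnbhs0_lt.
  have hn : h != 0 by near: h; exact: nbhs_dnbhs_neq.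
  rewrite -[h%:A]/(h * 1) mulr1.
  move: hr; rewrite !lt_min => /and3P[h1 h2 h3].
  have y01 : h + x \in `[0, 1].
    move: h2 h3 => /ltr_normlP[h2 h2'] /ltr_normlP[h3 h3'].
    rewrite in_itv /=; apply/andP; split; lra.
  have := Hd (h + x) y01; rewrite addrK h1 => /(_ isT) Hd'.
  rewrite -[df x](mulKf hn) -[_ *: _]/(h^-1 * _) -mulrBr normrM normfV.
  rewrite ler_pdivrMl ?normr_gt0 // mulrC distrC.
  by rewrite [_ * e]mulrC.
by apply: (DeriveDef (cvgP _ hc)); exact: (cvg_lim _ hc).
Unshelve. all: by end_near. Qed.


Lemma mvt01 {R : realType} (f df : R -> R) (a b : R) : has_deriv01 f df -> 0 <= a -> a <= b -> b <= 1 ->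
  exists2 c, c \in `[a, b] & f b - f a = df c * (b - a).
Proof.
move=> H a0 ab b1; apply: MVT_segment => //.
  move=> x; rewrite in_itv /= => /andP[h1 h2]; apply: deriv_is => //.
  rewrite in_itv /=; apply/andP; split; lra.
exact: deriv_cont H a0 b1.
Qed.

Lemma incr01 {R : realType} (f df : R -> R) (a b : R) : has_deriv01 f df ->
  (forall x, x \in `[0, 1] -> 0 < df x) -> 0 <= a -> a < b -> b <= 1 -> f a < f b.
Proof.
move=> H hp a0 ab b1; have [c c01 e] := mvt01 H a0 (ltW ab) b1.
rewrite -subr_gt0 e mulr_gt0 ?subr_gt0 // hp //.
by move: c01; rewrite !in_itv /= => /andP[h1 h2]; apply/andP; split; lra.
Qed.

Lemma unif_cont {R : realType} (h : R -> R) : {within `[0, 1], continuous h} -> forall e : R, 0 < e ->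
  \forall d \near 0^'+, forall x y : R, x \in `[0, 1] -> y \in `[0, 1] ->
     `|x - y| < d -> `|h x - h y| < e.
Proof.
move=> hc e e0.
have := (compact_near_coveringP _).1 (@segment_compact R 0 1).
move=> /near_covering_withinP cov.
have := cov R (0^'+) (fun d x => forall y : R, y \in `[0, 1] ->
     `|x - y| < d -> `|h x - h y| < e) _.
move=> /(_ _) []; first move=> x Kx.
  have := (subspace_continuousP _ _).1 hc x Kx.
  move=> /cvgr_dist_lt /(_ (e / 2)) /(_ (divr_gt0 e0 (ltr0Sn _ 1))).
  rewrite near_withinE => -[r /= r0 Hr].
  near=> x' i.
  have hx' : `|x - x'| < r / 2.
    by near: x'; apply: cvgr_dist_lt => //; rewrite divr_gt0.
  have hi : i < r / 2 by near: i; apply: nbhs_right_lt; rewrite divr_gt0.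
  move=> /= Kx' y Ky hy.
  have Hx' := Hr x'; have Hy := Hr y.
  rewrite /ball_ /= in Hx' Hy.
  have hxy : `|x - y| < r.
    rewrite (_ : x - y = (x - x') + (x' - y)); last by ring.
    apply: (le_lt_trans (ler_normD _ _)); lra.
  have := Hy hxy Ky; have := Hx' (lt_trans hx' _) Kx'.
  rewrite (_ : h x' - h y = (h x - h y) - (h x - h x')); last by ring.
  move=> a b; apply: (le_lt_trans (ler_normB _ _)); rewrite /=; lra.
move=> d0 hd0 H; exists d0 => // d dd dpos x y Kx Ky; exact: H.
Unshelve. all: by end_near. Qed.

Lemma compn_in {R : realType} m (T : 'I_m -> R -> R)
  (hmaps : forall i x, x \in `[0, 1] -> T i x \in `[(0:R), 1]) n w x :
  x \in `[0, 1] -> compn T n w x \in `[0, 1].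
Proof.
elim: n w => [|n IH] w //= hx; apply: hmaps; exact: IH.
Qed.

Lemma in01 {R : realType} (x : R) : x \in `[0, 1] -> 0 <= x /\ x <= 1.
Proof. by rewrite in_itv /= => /andP. Qed.

Lemma compn_lt {R : realType} m (T dT : 'I_m -> R -> R)
  (hmaps : forall i x, x \in `[0, 1] -> T i x \in `[(0:R), 1])
  (hder : forall i, has_deriv01 (T i) (dT i))
  (hpos : forall i x, x \in `[0, 1] -> 0 < dT i x) n w (x y : R) :
  0 <= x -> x < y -> y <= 1 -> compn T n w x < compn T n w y.
Proof.
move=> x0 xy y1; elim: n w => [|n IH] w //=.
have hx : x \in `[0, 1] by rewrite in_itv /=; apply/andP; split; lra.
have hy : y \in `[0, 1] by rewrite in_itv /=; apply/andP; split; lra.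
have [a0 _] := in01 (compn_in hmaps n (fun k => w k.+1) hx).
have [_ b1] := in01 (compn_in hmaps n (fun k => w k.+1) hy).
apply: (incr01 (hder (w 0%N)) (hpos (w 0%N))) => //; exact: IH.
Qed.

Lemma compn_add {R : realType} m (T : 'I_m -> R -> R) n k w x :
  compn T (k + n) w x = compn T k w (compn T n (iter k (@shift m) w) x).
Proof.
elim: k w => [|k IH] w //=.
by rewrite IH -iterS iterSr.
Qed.

Lemma compn_le {R : realType} m (T dT : 'I_m -> R -> R)
  (hmaps : forall i x, x \in `[0, 1] -> T i x \in `[(0:R), 1])
  (hder : forall i, has_deriv01 (T i) (dT i))
  (hpos : forall i x, x \in `[0, 1] -> 0 < dT i x) n w (x y : R) :
  0 <= x -> x <= y -> y <= 1 -> compn T n w x <= compn T n w y.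
Proof.
move=> x0; rewrite le_eqVlt => /orP[/eqP -> //|xy] y1.
by apply: ltW; apply: (compn_lt hmaps hder hpos).
Qed.

Lemma Dn_eq {R : realType} m (T dT : 'I_m -> R -> R)
  (hmaps : forall i x, x \in `[0, 1] -> T i x \in `[(0:R), 1])
  (hder : forall i, has_deriv01 (T i) (dT i))
  (hpos : forall i x, x \in `[0, 1] -> 0 < dT i x) n w :
  Dn T n w = compn T n w 1 - compn T n w 0.
Proof.
have hle := compn_le hmaps hder hpos n w.
have h01 : 0 <= 1 :> R by [].
have ub : ubound [set `|x.1 - x.2| | x in (compn T n w @` `[0, 1]) `*` (compn T n w @` `[0, 1])]
    (compn T n w 1 - compn T n w 0).
  move=> z /= [[a b] [[x /in01 [x0 x1] <-] [y /in01 [y0 y1] <-]] <-] /=.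
  have := hle _ _ (lexx 0) x0 x1; have := hle _ _ x0 x1 (lexx 1).
  have := hle _ _ (lexx 0) y0 y1; have := hle _ _ y0 y1 (lexx 1).
  move=> *; rewrite ler_norml; apply/andP; split; lra.
have mem : [set `|x.1 - x.2| | x in (compn T n w @` `[0, 1]) `*` (compn T n w @` `[0, 1])]
    (compn T n w 1 - compn T n w 0).
  exists (compn T n w 1, compn T n w 0).
    have i1 : (1:R) \in `[0, 1] by rewrite in_itv /= ler01 lexx.
    have i0 : (0:R) \in `[0, 1] by rewrite in_itv /= ler01 lexx.
    by split; [exists 1|exists 0].
  by rewrite /= ger0_norm // subr_ge0 hle.
apply/eqP; rewrite eq_le; apply/andP; split.
  by apply: ge_sup => //; exists (compn T n w 1 - compn T n w 0).
apply: sup_upper_bound => //; split.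
  by exists (compn T n w 1 - compn T n w 0).
by exists (compn T n w 1 - compn T n w 0).
Qed.

Lemma Pi_bounds {R : realType} m (T dT : 'I_m -> R -> R)
  (hmaps : forall i x, x \in `[0, 1] -> T i x \in `[(0:R), 1])
  (hder : forall i, has_deriv01 (T i) (dT i))
  (hpos : forall i x, x \in `[0, 1] -> 0 < dT i x) w k :
  compn T k w 0 <= Pi T w /\ Pi T w <= compn T k w 1.
Proof.
have i1 : (1:R) \in `[0, 1] by rewrite in_itv /= ler01 lexx.
have i0 : (0:R) \in `[0, 1] by rewrite in_itv /= ler01 lexx.
set u := fun n => compn T n w 0.
have nd : {homo u : n p / (n <= p)%N >-> n <= p}.
  apply/nondecreasing_seqP => n; rewrite /u -addn1 compn_add.
  have [h0 h1] := in01 (compn_in hmaps 1 (iter n (@shift m) w) i0).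
  exact: (compn_le hmaps hder hpos).
have cu : cvgn u.
  apply: nondecreasing_is_cvgn => //; exists 1 => _ [n _ <-].
  by have [] := in01 (compn_in hmaps n w i0).
have ub : forall n, u n <= compn T k w 1.
  move=> n; case: (leqP k n) => kn.
    rewrite /u -(subnKC kn) compn_add.
    have [h0 h1] := in01 (compn_in hmaps (n - k) (iter k (@shift m) w) i0).
    exact: (compn_le hmaps hder hpos).
  apply: (le_trans (nd _ _ (ltnW kn))).
  by apply: (compn_le hmaps hder hpos) => //; rewrite ler01.
split; first exact: (nondecreasing_cvgn_le nd cu).
by apply: limr_le => //; apply: nearW.
Qed.

Lemma err_bound {R : realType} m (T dT : 'I_m -> R -> R)
  (hmaps : forall i x, x \in `[0, 1] -> T i x \in `[(0:R), 1])
  (hder : forall i, has_deriv01 (T i) (dT i))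
  (hpos : forall i x, x \in `[0, 1] -> 0 < dT i x) (e B eta : R) (N : nat) (e0 : 0 <= e)
  (hU : forall i x y, x \in `[0, 1] -> y \in `[0, 1] -> `|x - y| < eta ->
      `|ln (dT i x) - ln (dT i y)| <= e)
  (hB : forall i x y, x \in `[0, 1] -> y \in `[0, 1] ->
      `|ln (dT i x) - ln (dT i y)| <= B)
  (hN : forall n, (N <= n)%N -> forall w, `|Dn T n w| < eta) :
  forall n w, `|ln (Dn T n w) + \sum_(0 <= i < n) g T dT (iter i (@shift m) w)|
     <= n%:R * e + (minn n N)%:R * B.
Proof.
have i1 : (1:R) \in `[0, 1] by rewrite in_itv /= ler01 lexx.
have i0 : (0:R) \in `[0, 1] by rewrite in_itv /= ler01 lexx.
elim=> [|n IH] w.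
  by rewrite (Dn_eq hmaps hder hpos) /= subr0 ln1 big_geq // addr0 normr0 min0n !mul0r addr0.
rewrite (@big_nat_recl _ _ _ n 0) //.
under eq_bigr => i _ do rewrite iterSr.
have ab : (compn T n (shift w) 0) < (compn T n (shift w) 1) by apply: (compn_lt hmaps hder hpos) => //; rewrite ltr01.
have [HA0 _] := in01 (compn_in hmaps n (shift w) i0).
have [_ b1] := in01 (compn_in hmaps n (shift w) i1).
have [c cab hc] := mvt01 (hder (w 0%N)) HA0 (ltW ab) b1.
have c01 : c \in `[0, 1].
  by move: cab; rewrite !in_itv /= => /andP[h1 h2]; apply/andP; split; lra.
have hDs : Dn T n (shift w) = (compn T n (shift w) 1) - (compn T n (shift w) 0) by rewrite (Dn_eq hmaps hder hpos).
have hD : Dn T n.+1 w = dT (w 0%N) c * Dn T n (shift w).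
  by rewrite (Dn_eq hmaps hder hpos) hDs -hc.
have [P0 P1] := Pi_bounds hmaps hder hpos (shift w) n.
have P01 : Pi T (shift w) \in `[0, 1].
  by rewrite in_itv /=; apply/andP; split; lra.
rewrite hD lnM; last 2 first.
- by rewrite posrE; apply: hpos.
- by rewrite posrE hDs subr_gt0.
rewrite /g /=.
rewrite (_ : ln (dT (w 0%N) c) + ln (Dn T n (shift w)) +
   (- ln (dT (w 0%N) (Pi T (shift w))) + \sum_(0 <= i < n) g T dT (iter i (@shift m) (shift w)))
   = (ln (dT (w 0%N) c) - ln (dT (w 0%N) (Pi T (shift w)))) +
     (ln (Dn T n (shift w)) + \sum_(0 <= i < n) g T dT (iter i (@shift m) (shift w)))); last by ring.
apply: (le_trans (ler_normD _ _)).
have IH' := IH (shift w).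
case: (leqP N n) => Nn.
  have -> : minn n.+1 N = minn n N by rewrite !(minn_idPr _) // ltnW.
  have hcp : `|c - Pi T (shift w)| < eta.
    apply: (le_lt_trans _ (hN n Nn (shift w))); rewrite hDs [X in _ <= X]ger0_norm; last by rewrite subr_ge0 ltW.
    move: cab; rewrite in_itv /= => /andP[h1 h2].
    rewrite ler_norml; apply/andP; split; lra.
  have := hU (w 0%N) c (Pi T (shift w)) c01 P01 hcp.
  rewrite -natr1 mulrDl mul1r; lra.
have -> : minn n.+1 N = n.+1 by rewrite (minn_idPl _).
move/minn_idPl: (ltnW Nn) => e1; rewrite e1 in IH'.
have := hB (w 0%N) c (Pi T (shift w)) c01 P01.
rewrite -natr1 !mulrDl !mul1r; lra.
Qed.

Theorem lemma1 (R : realType) (m : nat) (T dT : 'I_m -> R -> R)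
  (hmaps : forall i x, x \in `[0, 1] -> T i x \in `[(0:R), 1])
  (hC1 : forall i, C1_01 (T i) (dT i))
  (hpos : forall i x, x \in `[0, 1] -> 0 < dT i x)
  (hdisj : forall i j : 'I_m, i != j ->
     T i @` `]0, 1[ `&` T j @` `]0, 1[ = set0)
  (hD : forall eps : R, 0 < eps -> exists N : nat, forall n : nat, (N <= n)%N ->
     forall w : nat -> 'I_m, `|Dn T n w| < eps) :
  forall eps : R, 0 < eps -> exists N : nat, forall n : nat, (N <= n)%N ->
    forall w : nat -> 'I_m,
      `| - (n%:R^-1 * ln (Dn T n w)) - An T dT n w | <= eps.
Proof.
move=> eps eps0.
have hder : forall i, has_deriv01 (T i) (dT i) by move=> i; case: (hC1 i).
have hcl : forall i, {within `[0, 1], continuous (fun x => ln (dT i x))}.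
  move=> i; apply/subspace_continuousP => x Ax.
  have := (subspace_continuousP _ _).1 (hC1 i).2 x Ax.
  by apply: continuous_cvg; apply: continuous_ln; apply: hpos.
set e := eps / 2.
have e0 : 0 < e by rewrite divr_gt0.
have hU : \forall d \near 0^'+, forall i x y, x \in `[0, 1] -> y \in `[0, 1] ->
     `|x - y| < d -> `|ln (dT i x) - ln (dT i y)| < e.
  apply: filter_forall => i; exact: unif_cont (hcl i) e e0.
case: hU => r /= r0 Hr.
have eta0 : 0 < r / 2 by rewrite divr_gt0.
have hU' : forall i x y, x \in `[0, 1] -> y \in `[0, 1] -> `|x - y| < r / 2 ->
    `|ln (dT i x) - ln (dT i y)| <= e.
  move=> i x y Hx Hy Hxy; apply: ltW; apply: (Hr (r / 2)) => //.
  rewrite /ball_ /= sub0r normrN ger0_norm ?ltW //; lra.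
have hBn : \forall B \near +oo, forall i x y, x \in `[0, 1] -> y \in `[0, 1] ->
     `|ln (dT i x) - ln (dT i y)| <= B.
  apply: filter_forall => i.
  have [cM cM01 HM] := EVT_max ler01 (hcl i).
  have [cm cm01 Hm] := EVT_min ler01 (hcl i).
  near=> B => x y Hx Hy.
  have hB : ln (dT i cM) - ln (dT i cm) <= B.
    by near: B; apply: nbhs_pinfty_ge; rewrite num_real.
  have := HM x Hx; have := HM y Hy; have := Hm x Hx; have := Hm y Hy.
  move=> *; rewrite ler_norml; apply/andP; split; lra.
case: hBn => M [Mr HM].
set B := `|M| + 1.
have B0 : 0 <= B by rewrite addr_ge0 // ler01.
have HB : forall i x y, x \in `[0, 1] -> y \in `[0, 1] ->
     `|ln (dT i x) - ln (dT i y)| <= B.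
  by apply: HM; rewrite /B; apply: (le_lt_trans (ler_norm M)); rewrite ltrDl ltr01.
have [N HN] := hD (r / 2) eta0.
have herr := err_bound hmaps hder hpos (ltW e0) hU' HB HN.
set K := (N%:R * B) / e.
have K0 : 0 <= K by apply: divr_ge0; [apply: mulr_ge0; [exact: ler0n|exact: B0]|exact: ltW].
exists (Num.Def.archi_bound K).+1 => n hn w.
have n0 : (0 < n)%N by apply: leq_trans hn.
have nR : 0 < n%:R :> R by rewrite ltr0n.
have Kn : K <= n%:R.
  apply: ltW; apply: (lt_le_trans (archi_boundP K0)); rewrite ler_nat; exact: ltnW.
have -> : -(n%:R^-1 * ln (Dn T n w)) - An T dT n w = - (n%:R^-1 * (ln (Dn T n w) + \sum_(0 <= i < n) g T dT (iter i (@shift m) w))) by rewrite /An; ring.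
rewrite normrN normrM ger0_norm ?invr_ge0 //.
rewrite ler_pdivrMl //.
apply: (le_trans (herr n w)).
have hmin : (minn n N)%:R * B <= N%:R * B.
  by apply: ler_wpM2r => //; rewrite ler_nat geq_minr.
have : N%:R * B <= n%:R * e.
  by move: Kn; rewrite /K ler_pdivrMr.
rewrite /e; lra.
Unshelve. all: by end_near.
Qed.
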